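(* Let $\mathcal C$ be a category and $n\ge0$. Every degeneracy map in $Z^n(\mathcal C)$ is a monomorphism.
   Context: Notation: for $n\ge 0$, $[n]$ denotes $\{0,\dots,n-1\}$; $\Delta_+$ is the category of these finite total orders and order-preserving maps. For monotone $\varphi:[n]\to[m]$ define $\hat\varphi:[m+1]\to[n+1]$ by $\hat\varphi(i)=\min(\{j\in[n]:\varphi(j)\ge i\}\cup\{n\})$. Zigzags: in a category $\mathcal C$, a zigzag $X$ of length $n$ is a diagram $X(r_0)\xrightarrow{x_0} X(s_0)\xleftarrow{x'_0} X(r_1)\to\cdots\xrightarrow{x_{n-1}} X(s_{n-1})\xleftarrow{x'_{n-1}} X(r_n)$. A zigzag map $f:X\to Y$ (lengths $n$, $m$) consists of a monotone $f_s:[n]\to[m]$, regular slices $f(r_i):X(r_{\hat{f_s}(i)})\to Y(r_i)$ for $0\le i\le m$ and singular slices $f(s_j):X(s_j)\to Y(s_{f_s(j)})$ for $0\le j<n$, such that for each $0\le i<m$: if $f_s^{-1}(i)\neq\emptyset$ with least element $p$, greatest $q$, then $f(s_p)\circ x_p=y_i\circ f(r_i)$, $f(s_q)\circ x'_q=y'_i\circ f(r_{i+1})$, $f(s_j)\circ x'_j=f(s_{j+1})\circ x_{j+1}$ for $p\le j<q$; if $f_s^{-1}(i)=\emptyset$ then $y_i\circ f(r_i)=y'_i\circ f(r_{i+1})$. Composition: $(g\circ f)_s=g_s\circ f_s$, $(g\circ f)(s_j)=g(s_{f_s(j)})\circ f(s_j)$, $(g\circ f)(r_i)=g(r_i)\circ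 f(r_{\hat{g_s}(i)})$. This gives a category $Z(\mathcal C)$; $Z^0(\mathcal C)=\mathcal C$, $Z^n(\mathcal C)=Z(Z^{n-1}(\mathcal C))$. $\pi:Z(\mathcal C)\to\Delta_+$ sends a zigzag of length $n$ to $[n]$ and $f$ to $f_s$; $f$ is $\pi$-vertical if $\pi(f)$ is an identity; $f:x\to y$ is $\pi$-cocartesian if for every $h:x\to y'$ and $u:\pi(y)\to\pi(y')$ with $u\circ\pi(f)=\pi(h)$ there is a unique $v:y\to y'$ with $v\circ f=h$, $\pi(v)=u$. Degeneracy maps in $Z^n(\mathcal C)$ (by induction on $n$): in $Z^0(\mathcal C)$ the isomorphisms; for $n\ge1$ the maps generated under composition by simple degeneracy maps (the $\pi$-cocartesian maps $f$ with $\pi(f)$ a monomorphism of $\Delta_+$) and parallel degeneracy maps (the $\pi$-vertical maps whose regular and singular slices are all degeneracy maps in $Z^{n-1}(\mathcal C)$). *)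

(* Defs.v *)
From mathcomp Require Import all_boot.
Set Implicit Arguments. Unset Strict Implicit. Unset Printing Implicit Defensive.

Record Category := {
  cOb : Type;
  cHom : cOb -> cOb -> Type;
  ccomp : forall a b c, cHom b c -> cHom a b -> cHom a c;
  cid : forall a, cHom a a;
  ccompA : forall a b c d (h : cHom c d) (g : cHom b c) (f : cHom a b),
      ccomp h (ccomp g f) = ccomp (ccomp h g) f;
  ccomp1f : forall a b (f : cHom a b), ccomp (cid b) f = f;
  ccompf1 : forall a b (f : cHom a b), ccomp f (cid a) = f }.
Arguments ccomp {_ _ _ _}.
Arguments cid {_}.

(** * Raw categorical structures: "raw" objects/morphisms together with the
    predicates singling out the genuine objects / morphisms.  This lets us
    build Z(C) (whose morphisms are raw data subject to commutation conditions)
    and iterate it without proving anything. *)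
Record PCat := {
  Ob : Type;
  Hom : Ob -> Ob -> Type;
  okOb : Ob -> Prop;
  okHom : forall a b, Hom a b -> Prop;
  comp : forall a b c, Hom b c -> Hom a b -> Hom a c;
  idm : forall a, Hom a a }.
Arguments Hom : clear implicits.
Arguments okOb {p}.
Arguments okHom {p a b}.
Arguments comp {p a b c}.
Arguments idm {p}.

Definition PCat_of (C : Category) : PCat :=
  {| Ob := cOb C; Hom := @cHom C; okOb := fun _ => True;
     okHom := fun _ _ _ => True; comp := @ccomp C; idm := @cid C |}.

(** * Delta_+ : [n] = 'I_n, morphisms = monotone maps *)
Definition monotone n m (f : 'I_n -> 'I_m) : Prop :=
  forall i j : 'I_n, i <= j -> f i <= f j.

Definition hat n m (f : 'I_n -> 'I_m) (i : 'I_m.+1) : 'I_n.+1 :=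
  inord (\big[minn/n]_(j < n | i <= f j) (j : nat)).

Definition delta_mono n m (f : 'I_n -> 'I_m) : Prop :=
  forall k (a b : 'I_k -> 'I_n), monotone a -> monotone b ->
    (forall t, f (a t) = f (b t)) -> forall t, a t = b t.

(** indices: for i : [n], r_i = rl i and r_{i+1} = rr i in [n+1] *)
Definition rl n (i : 'I_n) : 'I_n.+1 := widen_ord (leqnSn n) i.
Definition rr n (i : 'I_n) : 'I_n.+1 := lift ord0 i.

Section Zig.
Variable D : PCat.

(** zigzag of length zlen : r_0 -x_0-> s_0 <-x'_0- r_1 -> ... <- r_n *)
Record zobj := ZObj {
  zlen : nat;
  zr : 'I_zlen.+1 -> Ob D;
  zs : 'I_zlen -> Ob D;
  zx : forall i : 'I_zlen, Hom D (zr (rl i)) (zs i);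
  zx' : forall i : 'I_zlen, Hom D (zr (rr i)) (zs i) }.
Arguments zr : clear implicits.
Arguments zs : clear implicits.
Arguments zx : clear implicits.
Arguments zx' : clear implicits.

(** raw zigzag map: f_s, regular slices (tagged with their source index,
    which must be hat f_s i), singular slices. *)
Record zhom (X Y : zobj) := ZHom {
  zfs : 'I_(zlen X) -> 'I_(zlen Y);
  zfr : forall i : 'I_(zlen Y).+1, {j : 'I_(zlen X).+1 & Hom D (zr X j) (zr Y i)};
  zfsing : forall j : 'I_(zlen X), Hom D (zs X j) (zs Y (zfs j)) }.

Definition zcomp (X Y Z : zobj) (g : zhom Y Z) (f : zhom X Y) : zhom X Z :=
  @ZHom X Z (fun j => zfs g (zfs f j))
    (fun i => existT (fun k => Hom D (zr X k) (zr Z i))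
                (projT1 (zfr f (projT1 (zfr g i))))
                (comp (projT2 (zfr g i)) (projT2 (zfr f (projT1 (zfr g i))))))
    (fun j => comp (zfsing g (zfs f j)) (zfsing f j)).

Definition zid (X : zobj) : zhom X X :=
  @ZHom X X (fun j => j)
    (fun i => existT (fun k => Hom D (zr X k) (zr X i)) i (idm (zr X i)))
    (fun j => idm (zs X j)).

Definition zokOb (X : zobj) : Prop :=
  (forall i, okOb (zr X i)) /\ (forall j, okOb (zs X j)) /\
  (forall j, okHom (zx X j)) /\ (forall j, okHom (zx' X j)).

(** the conditions defining a zigzag map (equalities of morphisms whose
    endpoints are only propositionally equal are stated as equalities of
    dependent pairs over ordinal indices) *)
Definition zokHom (X Y : zobj) (f : zhom X Y) : Prop :=
  monotone (zfs f) /\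
  (forall i, projT1 (zfr f i) = hat (zfs f) i) /\
  (forall i, okHom (projT2 (zfr f i))) /\
  (forall j, okHom (zfsing f j)) /\
  (* nonempty fiber, least element p: f(s_p) o x_p = y_i o f(r_i) *)
  (forall p : 'I_(zlen X), (forall j, zfs f j = zfs f p -> p <= j) ->
     existT (fun k => Hom D (zr X k) (zs Y (zfs f p)))
        (rl p) (comp (zfsing f p) (zx X p))
     = existT (fun k => Hom D (zr X k) (zs Y (zfs f p)))
        (projT1 (zfr f (rl (zfs f p))))
        (comp (zx Y (zfs f p)) (projT2 (zfr f (rl (zfs f p)))))) /\
  (* nonempty fiber, greatest element q: f(s_q) o x'_q = y'_i o f(r_{i+1}) *)
  (forall q : 'I_(zlen X), (forall j, zfs f j = zfs f q -> j <= q) ->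
     existT (fun k => Hom D (zr X k) (zs Y (zfs f q)))
        (rr q) (comp (zfsing f q) (zx' X q))
     = existT (fun k => Hom D (zr X k) (zs Y (zfs f q)))
        (projT1 (zfr f (rr (zfs f q))))
        (comp (zx' Y (zfs f q)) (projT2 (zfr f (rr (zfs f q)))))) /\
  (* p <= j < q (j, j+1 in the same fiber): f(s_j) o x'_j = f(s_{j+1}) o x_{j+1} *)
  (forall j j1 : 'I_(zlen X), val j1 = (val j).+1 -> zfs f j = zfs f j1 ->
     existT (fun kl : 'I_(zlen X).+1 * 'I_(zlen Y) => Hom D (zr X kl.1) (zs Y kl.2))
        (rr j, zfs f j) (comp (zfsing f j) (zx' X j))
     = existT (fun kl : 'I_(zlen X).+1 * 'I_(zlen Y) => Hom D (zr X kl.1) (zs Y kl.2))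
        (rl j1, zfs f j1) (comp (zfsing f j1) (zx X j1))) /\
  (* empty fiber: y_i o f(r_i) = y'_i o f(r_{i+1}) *)
  (forall i : 'I_(zlen Y), (forall j, zfs f j <> i) ->
     existT (fun k => Hom D (zr X k) (zs Y i))
        (projT1 (zfr f (rl i))) (comp (zx Y i) (projT2 (zfr f (rl i))))
     = existT (fun k => Hom D (zr X k) (zs Y i))
        (projT1 (zfr f (rr i))) (comp (zx' Y i) (projT2 (zfr f (rr i))))).

Definition Z : PCat :=
  {| Ob := zobj; Hom := zhom; okOb := zokOb; okHom := zokHom;
     comp := zcomp; idm := zid |}.

(** pi : Z(D) -> Delta_+ ;  pi(f) = zfs f *)
Definition pi_vertical (X Y : zobj) (f : zhom X Y) : Prop :=
  zlen X = zlen Y /\ forall j, val (zfs f j) = val j.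

Definition pi_cocartesian (X Y : zobj) (f : zhom X Y) : Prop :=
  forall (Y' : zobj) (h : zhom X Y') (u : 'I_(zlen Y) -> 'I_(zlen Y')),
    zokOb Y' -> zokHom h -> monotone u -> (forall j, u (zfs f j) = zfs h j) ->
    exists v : zhom Y Y',
      (zokHom v /\ zcomp v f = h /\ (forall i, zfs v i = u i)) /\
      (forall v' : zhom Y Y', zokHom v' -> zcomp v' f = h ->
         (forall i, zfs v' i = u i) -> v' = v).

Definition simple_deg (X Y : zobj) (f : zhom X Y) : Prop :=
  pi_cocartesian f /\ delta_mono (zfs f).

Definition parallel_deg (P : forall a b : Ob D, Hom D a b -> Prop)
    (X Y : zobj) (f : zhom X Y) : Prop :=
  pi_vertical f /\ (forall i, P _ _ (projT2 (zfr f i))) /\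
  (forall j, P _ _ (zfsing f j)).

End Zig.

Fixpoint Zn (C : PCat) (n : nat) : PCat :=
  match n with 0 => C | k.+1 => Z (Zn C k) end.

Definition is_mono (C : PCat) (a b : Ob C) (f : Hom C a b) : Prop :=
  forall (c : Ob C) (g h : Hom C c a), okOb c -> okHom g -> okHom h ->
    comp f g = comp f h -> g = h.

Definition is_iso (C : PCat) (a b : Ob C) (f : Hom C a b) : Prop :=
  exists g : Hom C b a, okHom g /\ comp g f = idm a /\ comp f g = idm b.

Inductive comp_closure (C : PCat) (P : forall a b, Hom C a b -> Prop)
  : forall a b, Hom C a b -> Prop :=
| cc_base a b (f : Hom C a b) :
    okOb a -> okOb b -> okHom f -> P a b f -> comp_closure P f
| cc_comp a b c (g : Hom C b c) (f : Hom C a b) :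
    okOb b -> comp_closure P g -> comp_closure P f -> comp_closure P (comp g f).

Fixpoint degeneracy (C : PCat) (n : nat)
  : forall a b : Ob (Zn C n), Hom (Zn C n) a b -> Prop :=
  match n return forall a b : Ob (Zn C n), Hom (Zn C n) a b -> Prop with
  | 0 => @is_iso C
  | k.+1 => @comp_closure (Z (Zn C k))
              (fun a b f => @simple_deg (Zn C k) a b f \/
                            @parallel_deg (Zn C k) (@degeneracy C k) a b f)
  end.
Arguments degeneracy C n {a b} f.

(* Main.v *)
Require Import Defs.
From mathcomp Require Import all_boot.
From Stdlib Require Import Eqdep_dec FunctionalExtensionality.
Set Implicit Arguments. Unset Strict Implicit.

Record laws (D : PCat) : Prop := Laws {
 lA : forall a b c d (h : Hom D c d) (g : Hom D b c) (f : Hom D a b),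
        Defs.comp h (Defs.comp g f) = Defs.comp (Defs.comp h g) f;
 l1l : forall a b (f : Hom D a b), Defs.comp (idm b) f = f;
 l1r : forall a b (f : Hom D a b), Defs.comp f (idm a) = f;
 lid : forall a : Ob D, okHom (idm a) }.

Definition rawmono (D : PCat) (a b : Ob D) (f : Hom D a b) :=
  forall c (g h : Hom D c a), Defs.comp f g = Defs.comp f h -> g = h.

Lemma ord_dec n : forall x y : 'I_n, {x = y} + {x <> y}.
Proof. exact: eq_comparable. Qed.

Lemma pair_inj n (P : 'I_n -> Type) (a : 'I_n) (x y : P a) :
  existT P a x = existT P a y -> x = y.
Proof. exact: (inj_pair2_eq_dec _ (@ord_dec n)). Qed.

Lemma bigmin_le (I : finType) (P : pred I) (F : I -> nat) x j0 :
  P j0 -> \big[minn/x]_(j | P j) F j <= F j0.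
Proof.
move=> Pj; rewrite unlock /index_enum.
have : j0 \in Finite.enum I by rewrite -enumT mem_enum.
elim: (Finite.enum I) => //= a r IH; rewrite inE => /orP [/eqP <-| H].
  by rewrite Pj geq_minl.
by case: (P a); [apply: leq_trans (geq_minr _ _) (IH H)| apply: IH].
Qed.

Lemma big_le_n n (P : pred 'I_n) : \big[minn/n]_(j < n | P j) (j : nat) <= n.
Proof.
apply: (big_ind (fun x => x <= n)) => //.
- move=> x y Hx _; exact: leq_trans (geq_minl x y) Hx.
- move=> j _; exact: ltnW.
Qed.

Lemma hat_val n m (s : 'I_n -> 'I_m) (Hs : forall j, val (s j) = val j)
  (Hnm : n = m) (i : 'I_m.+1) : val (hat s i) = val i.
Proof.
subst m. rewrite /hat.
have Hi : (i : nat) <= n by rewrite -ltnS.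
have E : \big[minn/n]_(j < n | i <= s j) (j : nat) = i.
  apply/eqP; rewrite eqn_leq; apply/andP; split.
  - move: Hi; rewrite leq_eqVlt => /orP [/eqP -> | Hlt]; first exact: big_le_n.
    by apply: (@bigmin_le _ _ _ _ (Ordinal Hlt)); rewrite /= Hs.
  - apply: (big_ind (fun x => i <= x)) => //.
    + move=> x y; rewrite leq_min => -> ->; done.
    + by move=> j; rewrite Hs.
by rewrite E /= inordK // ltnS.
Qed.

Lemma hat_empty n m (s : 'I_n -> 'I_m) (Hn : n = 0) (i : 'I_m.+1) : val (hat s i) = 0.
Proof.
rewrite /hat /= inordK; last by rewrite ltnS big_le_n.
subst n; have := big_le_n (fun j => i <= s j); rewrite leqn0 => /eqP //.
Qed.

Section ZL.
Variable D : PCat.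
Hypothesis L : laws D.

Lemma zhom_eta (X Y : zobj D) (f : zhom X Y) : f = ZHom (zfr f) (zfsing f).
Proof. by case: f. Qed.

Lemma Z_laws : laws (Z D).
Proof.
split.
- move=> a b c d [hs hr hsg] [gs gr gsg] [fs fr fsg] /=.
  rewrite /zcomp /=. f_equal.
  + apply: functional_extensionality_dep => i /=. by rewrite (lA L).
  + apply: functional_extensionality_dep => j /=. by rewrite (lA L).
- move=> a b [fs fr fsg] /=. rewrite /zcomp /=. f_equal.
  + apply: functional_extensionality_dep => i /=. rewrite (l1l L). by case: (fr i).
  + apply: functional_extensionality_dep => j /=. by rewrite (l1l L).
- move=> a b [fs fr fsg] /=. rewrite /zcomp /=. f_equal.
  + apply: functional_extensionality_dep => i /=. rewrite (l1r L). by case: (fr i).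
  + apply: functional_extensionality_dep => j /=. by rewrite (l1r L).
- move=> X /=. rewrite /zokHom /=.
  split; first by [].
  split; first by move=> i; apply: val_inj; rewrite hat_val.
  split; first by move=> i; exact: (lid L).
  split; first by move=> j; exact: (lid L).
  split; first by move=> p _; rewrite (l1l L) (l1r L).
  split; first by move=> q _; rewrite (l1l L) (l1r L).
  split; first by move=> j j1 Hj Heq; move: Hj; rewrite Heq => /eqP; rewrite eqn_leq ltnn andbF.
  by move=> i H; case: (H i).
Qed.
End ZL.

Section M.
Variable D : PCat.
Hypothesis L : laws D.

Lemma split_mono (a b : Ob D) (f : Hom D a b) (r : Hom D b a) :
  Defs.comp r f = idm a -> rawmono f.
Proof.
move=> H c g h E.
by rewrite -(l1l L g) -(l1l L h) -H -!(lA L) E.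
Qed.

Lemma comp_mono (a b c : Ob D) (g : Hom D b c) (f : Hom D a b) :
  rawmono g -> rawmono f -> rawmono (Defs.comp g f).
Proof.
move=> Hg Hf d x y E; apply: Hf; apply: Hg; by rewrite !(lA L).
Qed.

Lemma zhom_ext (X Y : zobj D) (g h : zhom X Y) :
  (forall j, zfs g j = zfs h j) -> (forall i, zfr g i = zfr h i) ->
  (forall j, existT (fun t => Hom D (@zs _ X j) (@zs _ Y t)) (zfs g j) (zfsing g j)
           = existT _ (zfs h j) (zfsing h j)) -> g = h.
Proof.
case: g => gs gr gsg; case: h => hs hr hsg /= Hs Hr Hsg.
have E : gs = hs by apply: functional_extensionality.
subst hs.
have Er : gr = hr by apply: functional_extensionality_dep.
subst hr.
have Eg : gsg = hsg.
  apply: functional_extensionality_dep => j.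
  exact: (inj_pair2_eq_dec _ (@ord_dec _) _ _ _ _ (Hsg j)).
by subst.
Qed.

Lemma reg_cancel (W X Y : zobj D) (f : zhom X Y) (g h : zhom W X) i :
  rawmono (projT2 (zfr f i)) -> zcomp f g = zcomp f h ->
  zfr g (projT1 (zfr f i)) = zfr h (projT1 (zfr f i)).
Proof.
move=> Hm E.
have := congr1 (fun k => zfr k i) E; rewrite /zcomp /=.
move: Hm; case: (zfr f i) => k F /= Hm.
case: (zfr g k) => a ga; case: (zfr h k) => b hb /= E2.
have ab : a = b by exact: (congr1 (@projT1 _ _) E2).
subst b.
have := inj_pair2_eq_dec _ (@ord_dec _) _ _ _ _ E2.
by move=> /Hm ->.
Qed.

Lemma sing_cancel (W X Y : zobj D) (f : zhom X Y) (g h : zhom W X) j :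
  zfs g j = zfs h j -> rawmono (zfsing f (zfs g j)) -> zcomp f g = zcomp f h ->
  existT (fun t => Hom D (@zs _ W j) (@zs _ X t)) (zfs g j) (zfsing g j)
           = existT _ (zfs h j) (zfsing h j).
Proof.
move=> Hs Hm E.
have := congr1 (fun k => existT (fun t => Hom D (@zs _ W j) (@zs _ Y t)) (zfs k j) (zfsing k j)) E.
rewrite /zcomp /=.
move: Hm; move: (zfsing g j) (zfsing h j); rewrite Hs.
move=> ga hb Hm E2.
have := inj_pair2_eq_dec _ (@ord_dec _) _ _ _ _ E2.
by move=> /Hm ->.
Qed.

End M.

Lemma noord n (H : n = 0) (j : 'I_n) : False.
Proof. by subst; case: j. Qed.

Lemma retr_lt n m (s : 'I_n -> 'I_m) (i : 'I_m) :
  0 < n -> \max_(j < n | s j <= i) (j : nat) < n.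
Proof.
move=> Hn.
have : \max_(j < n | s j <= i) (j : nat) <= n.-1.
  by apply/bigmax_leqP => j _; rewrite -ltnS prednK.
by rewrite -ltnS prednK.
Qed.

Section M.
Variable D : PCat.
Hypothesis L : laws D.

Lemma par_mono (X Y : zobj D) (f : zhom X Y) :
  (forall i, projT1 (zfr f i) = hat (zfs f) i) -> pi_vertical f ->
  (forall i, rawmono (projT2 (zfr f i))) -> (forall j, rawmono (zfsing f j)) ->
  @rawmono (Z D) X Y f.
Proof.
move=> Hh [Hl Hv] Hr Hs W g h E.
have Hgs : forall j, zfs g j = zfs h j.
  move=> j; have := congr1 (fun k => zfs k j) E => /= /(congr1 val).
  rewrite !Hv => ?; exact: val_inj.
apply: zhom_ext => //.
- move=> k.
  have Hk : (k : nat) < (zlen Y).+1 by rewrite -Hl.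
  have <- : projT1 (zfr f (Ordinal Hk)) = k.
    by apply: val_inj; rewrite Hh hat_val.
  exact: reg_cancel (Hr _) E.
- move=> j; apply: sing_cancel => //; exact: E.
Qed.

Lemma simple_mono (X Y : zobj D) (f : zhom X Y) :
  zokOb X -> zokHom f -> simple_deg f -> @rawmono (Z D) X Y f.
Proof.
move=> oX oF [Hc Hd].
have Hmon := oF.1.
have Hinj : forall j j', zfs f j = zfs f j' -> j = j'.
  move=> j j' E.
  have := Hd 1 (fun _ => j) (fun _ => j') (fun _ _ _ => leqnn _) (fun _ _ _ => leqnn _)
    (fun _ => E) ord0; done.
have Hstr : forall j j', zfs f j' <= zfs f j -> j' <= j.
  move=> j j' H; rewrite leqNgt; apply/negP => Hlt.
  have H1 : zfs f j <= zfs f j' by apply: Hmon; exact: ltnW.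
  have E : zfs f j = zfs f j' by apply: val_inj; apply/eqP; rewrite eqn_leq H1 H.
  by move: Hlt; rewrite (Hinj _ _ E) ltnn.
case: (posnP (zlen X)) => Hn; last first.
- pose u (i : 'I_(zlen Y)) : 'I_(zlen X) := Ordinal (retr_lt (zfs f) i Hn).
  have Hu : monotone u.
    move=> i1 i2 H12 /=; apply/bigmax_leqP => j Hj.
    apply: (@leq_bigmax_cond _ (fun j0 => zfs f j0 <= i2) (fun j0 => j0 : nat) j).
    exact: leq_trans Hj H12.
  have Huf : forall j, u (zfs f j) = zfs (zid X) j.
    move=> j; apply: val_inj => /=; apply/eqP; rewrite eqn_leq; apply/andP; split.
    + by apply/bigmax_leqP => j' Hj'; apply: Hstr.
    + exact: (@leq_bigmax_cond _ (fun j0 => zfs f j0 <= zfs f j) (fun j0 => j0 : nat) j).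
  have [v [[_ [Ev _]] _]] := Hc X (zid X) u oX (lid (Z_laws L) X) Hu Huf.
  exact: (split_mono (Z_laws L) Ev).
- pose Y' : zobj D := @ZObj D (zlen Y) (fun _ => zr (z:=X) ord0) (fun _ => zr (z:=X) ord0)
     (fun _ => idm _) (fun _ => idm _).
  pose h' : zhom X Y' := @ZHom D X Y' (fun j => False_rect _ (noord Hn j))
     (fun i => existT (fun k => Hom D (zr (z:=X) k) (zr (z:=Y') i)) ord0 (idm (zr (z:=X) ord0)))
     (fun j => False_rect _ (noord Hn j)).
  have oY' : zokOb Y'.
    split; first by move=> i; exact: oX.1.
    split; first by move=> i; exact: oX.1.
    split; move=> j; exact: (lid L).
  have oh' : zokHom h'.
    split; first by move=> j; case: (noord Hn j).
    split; first by move=> i; apply: val_inj; rewrite hat_empty.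
    split; first by move=> i; exact: (lid L).
    split; first by move=> j; case: (noord Hn j).
    split; first by move=> j; case: (noord Hn j).
    split; first by move=> j; case: (noord Hn j).
    split; first by move=> j; case: (noord Hn j).
    by [].
  have Hu : monotone (fun i : 'I_(zlen Y) => i) by [].
  have Huf : forall j, (fun i : 'I_(zlen Y) => i) (zfs f j) = zfs h' j.
    by move=> j; case: (noord Hn j).
  have [v [[_ [Ev _]] _]] := Hc Y' h' _ oY' oh' Hu Huf.
  have one : forall a b : 'I_(zlen X).+1, a = b.
    move=> a b; apply: val_inj; case: a => a Ha; case: b => b Hb /=.
    by move: Ha Hb; rewrite Hn !ltnS !leqn0 => /eqP -> /eqP ->.
  have [k Hmk] : exists k, rawmono (projT2 (zfr f k)).
    have := congr1 (fun k => zfr k ord0) Ev; rewrite /zcomp /=.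
    case: (zfr v ord0) => k V /= E.
    exists k; move: E; case: (zfr f k) => kk F /= E.
    have ek := one kk ord0; subst kk.
    have := inj_pair2_eq_dec _ (@ord_dec _) _ _ _ _ E.
    move=> E2; exact: (split_mono L E2).
  move=> W g h E.
  apply: zhom_ext => //.
  + move=> j; case: (noord Hn (zfs g j)).
  + move=> i; rewrite (one i (projT1 (zfr f k))); exact: reg_cancel Hmk E.
  + move=> j; case: (noord Hn (zfs g j)).
Qed.

End M.

Lemma step (D : PCat) (L : laws D) (P : forall a b : Ob D, Hom D a b -> Prop)
  (HP : forall a b (f : Hom D a b), okOb a -> okOb b -> P a b f -> rawmono f) :
  forall a b (f : Hom (Z D) a b),
    @comp_closure (Z D) (fun a b f => @simple_deg D a b f \/ @parallel_deg D P a b f) a b f -> rawmono f.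
Proof.
move=> a0 b0 f0 H; elim: H.
- move=> a b f oa ob oF [Hs | [Hv [Hr Hsg]]].
  + exact: (simple_mono L oa oF Hs).
  + apply: par_mono => //; first exact: oF.2.1.
    * move=> i; apply: HP (Hr i); [exact: oa.1 | exact: ob.1].
    * move=> j; apply: HP (Hsg j); [exact: oa.2.1 | exact: ob.2.1].
- move=> a b c g f _ _ Hg _ Hf; exact: (comp_mono (Z_laws L) Hg Hf).
Qed.

Lemma Zn_laws (C : Category) n : laws (Zn (PCat_of C) n).
Proof.
elim: n => [|n IH] /=.
- split => //=; [exact: ccompA | exact: ccomp1f | exact: ccompf1].
- exact: Z_laws.
Qed.

Lemma deg_raw (C : Category) n : forall (a b : Ob (Zn (PCat_of C) n))
    (f : Hom (Zn (PCat_of C) n) a b),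
  okOb a -> okOb b -> degeneracy (PCat_of C) n f -> rawmono f.
Proof.
elim: n => [|n IH] a b f oa ob /=.
- move=> [g [_ [Hg _]]]; exact: (split_mono (Zn_laws C 0) Hg).
- move=> H; exact: (@step _ (Zn_laws C n) (@degeneracy (PCat_of C) n) IH a b f H).
Qed.

Theorem lemma3p6 (C : Category) (n : nat) (a b : Ob (Zn (PCat_of C) n))
    (f : Hom (Zn (PCat_of C) n) a b) :
  okOb a -> okOb b -> degeneracy (PCat_of C) n f -> is_mono f.
Proof.
move=> oa ob H c g h _ _ _; exact: deg_raw oa ob H c g h.
Qed.
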